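(* Let $k\ge 4$, $n=2k-1$, $\lambda\in\overline{\mathcal{U}}_{T_n}$, and let $Y=\mathrm{KN}(S_\lambda)$ with hook lengths $h_{i,j}$. Write the elements of $S_\lambda$ increasingly as $0=s_0<s_1<\cdots$ and let $z$ be the index with $s_z=n-2$. Then $h_{i+1,1}=h_{1,i+1}$ for every $0\le i\le z-1$, and $h_{1,i+1}=h_{i,1}$ for every $z+1\le i\le n-2$.
   Context: A partition of $N$ into distinct parts is a sequence $\lambda=(\lambda_1<\dots<\lambda_t)$ of positive integers with sum $N$ and $t\ge 2$, identified with its set of parts. Missing parts: $\mathcal{M}_\lambda=\{1,\dots,\lambda_t\}\setminus\lambda$. $\lambda$ is refinable if two distinct missing parts sum to a part of $\lambda$, unrefinable otherwise; $\mathcal{U}_N$ is the set of unrefinable partitions of $N$. An element of $\mathcal{U}_N$ is maximal if its largest part is the maximum of the largest parts of elements of $\mathcal{U}_N$; $\widetilde{\mathcal{U}}_N$ is the set of these and $\overline{\mathcal{U}}_N=\{\lambda\in\widetilde{\mathcal{U}}_N:\#\mathcal{M}_\lambda=\lfloor\lambda_t/2\rfloor\}$. $T_n=n(n+1)/2$. For $\lambda\in\overline{\mathcal{U}}_{T_n}$ (with $n=2k-1$, $k\ge 4$) one knows $\lambda_t=2n-4$, $t=n-2$ and $n-2\notin\lambda$. $S_\lambda=\mathbb{N}_0\setminus\lambda$. The Keith–Nath transformation sends a set $S\subseteq\mathbb{N}_0$ with $0\in S$ and finite complement to the Young diagram $\mathrm{KN}(S)$ whose boundary is the lattice path that, starting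 at the origin, takes for $j=0,1,\dots,\max(\mathbb{N}_0\setminus S)$ an east step if $j\in S$ and a north step otherwise. Diagrams are in English convention; $h_{i,j}$ is the hook length of the cell in row $i$ (from the top) and column $j$ (from the left): (cells to its right in its row) + (cells below it in its column) + 1. *)

(* Defs.v *)
From mathcomp Require Import all_boot.
Set Implicit Arguments. Unset Strict Implicit. Unset Printing Implicit Defensive.

Definition is_dpart (N : nat) (l : seq nat) : bool :=
  [&& sorted ltn l, all (fun x => 0 < x) l, sumn l == N & 2 <= size l].

Definition largest (l : seq nat) : nat := last 0 l.

Definition missing (l : seq nat) : seq nat :=
  [seq x <- iota 1 (largest l) | x \notin l].

Definition refinable (l : seq nat) : bool :=
  has (fun a => has (fun b => (a != b) && (a + b \in l)) (missing l)) (missing l).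

Definition unrefinable (N : nat) (l : seq nat) : bool :=
  is_dpart N l && ~~ refinable l.

Definition maximal_unref (N : nat) (l : seq nat) : Prop :=
  unrefinable N l /\ forall m, unrefinable N m -> largest m <= largest l.

Definition Ubar (N : nat) (l : seq nat) : Prop :=
  maximal_unref N l /\ size (missing l) = (largest l)./2.

Definition T (n : nat) : nat := n * n.+1 %/ 2.

Definition S_lam (l : seq nat) : pred nat := fun j => j \notin l.

(* Keith--Nath transformation of S (with F = max(N_0 \ S)), given as the list
   of row lengths, top row first (English convention).  The lattice path takes
   for j = 0..F an east step if j \in S and a north step otherwise; the north
   step at j lies at x-coordinate #{s in S | s < j}, which is the length of the
   corresponding row; the last north step gives the top row. *)
Definition KN (S : pred nat) (F : nat) : seq nat :=
  rev [seq count S (iota 0 j) | j <- iota 0 F.+1 & ~~ S j].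

(* hook length of the cell in row i, column j (1-indexed) of the diagram with
   row lengths p (top row first): arm + leg + 1 *)
Definition hook (p : seq nat) (i j : nat) : nat :=
  (nth 0 p i.-1 - j) + count (fun r => j <= r) (drop i p) + 1.

(* Main.v *)
Require Import Defs.
From mathcomp Require Import all_boot zify.
Set Implicit Arguments. Unset Strict Implicit.

Lemma cnt_iota (u : seq nat) y : uniq u ->
  count (mem u) (iota 0 y) = count (fun x => x < y) u.
Proof.
move=> Uu; elim: y => [|y IH].
  by rewrite /= (eq_count (a2 := pred0)) ?count_pred0.
rewrite -addn1 iotaD count_cat IH /= add0n addn0.
have -> : count (fun x => x < y + 1) u = count (predU (fun x => x < y) (pred1 y)) u.
  by apply: eq_count => x /=; rewrite addn1 ltnS leq_eqVlt orbC.
have E0 : count (predI (fun x => x < y) (pred1 y)) u = 0.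
  rewrite (eq_count (a2 := pred0)) ?count_pred0 // => x /=.
  by case: (x =P y) => [->|]; rewrite ?ltnn ?andbF.
have := count_predUI (fun x => x < y) (pred1 y) u.
rewrite E0 addn0 => ->; by rewrite count_uniq_mem.
Qed.

Lemma cnt_lt_index (u : seq nat) y : sorted ltn u -> y \in u ->
  count (fun x => x < y) u = index y u.
Proof.
elim: u => [|a u IH] //= Hs Hy.
have Hall := order_path_min ltn_trans Hs.
case: (a =P y) => [<-|ne].
  rewrite ltnn add0n; apply/eqP; rewrite -leqn0 leqNgt -has_count; apply/hasPn => x xu.
  by move/allP: Hall => /(_ x xu) ax; rewrite -leqNgt ltnW.
have yu : y \in u by move: Hy; rewrite inE => /orP[/eqP E|//]; case: ne.
move/allP: Hall => /(_ y yu) ay.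
by rewrite ay IH // (path_sorted Hs).
Qed.

Lemma cnt_le_index (u : seq nat) y : sorted ltn u -> y \in u ->
  count (fun x => x <= y) u = (index y u).+1.
Proof.
elim: u => [|a u IH] //= Hs Hy.
have Hall := order_path_min ltn_trans Hs.
case: (a =P y) => [<-|ne].
  rewrite leqnn add1n; congr S; apply/eqP; rewrite -leqn0 leqNgt -has_count; apply/hasPn => x xu.
  by move/allP: Hall => /(_ x xu) ax; rewrite -ltnNge.
have yu : y \in u by move: Hy; rewrite inE => /orP[/eqP E|//]; case: ne.
move/allP: Hall => /(_ y yu) ay.
by rewrite (ltnW ay) IH // (path_sorted Hs).
Qed.

Lemma cnt_lt_nth (u : seq nat) i : sorted ltn u -> i < size u ->
  count (fun x => x < nth 0 u i) u = i.
Proof.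
move=> Hs Hi; rewrite cnt_lt_index ?mem_nth // index_uniq //.
exact: sorted_uniq ltn_trans ltnn _ Hs.
Qed.

Lemma cnt_le_nth (u : seq nat) i : sorted ltn u -> i < size u ->
  count (fun x => x <= nth 0 u i) u = i.+1.
Proof.
move=> Hs Hi; rewrite cnt_le_index ?mem_nth // index_uniq //.
exact: sorted_uniq ltn_trans ltnn _ Hs.
Qed.

Lemma le_last_path a (s : seq nat) : path ltn a s -> forall x, x \in a :: s -> x <= last a s.
Proof.
elim: s a => [|b s IH] a /=; first by move=> _ x; rewrite inE => /eqP ->.
move=> /andP[ab Hp] x; rewrite inE => /orP[/eqP ->|xs].
  apply: (leq_trans (ltnW ab)); apply: IH => //; exact: mem_head.
exact: IH.
Qed.

Lemma split_sum q e (F : nat -> nat) : e <= 1 ->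
  \sum_(1 <= x < (q.*2 + e).+1) F x =
  \sum_(1 <= x < q.+1) (F x + F ((q.*2 + e).+1 - x)) + e * F q.+1.
Proof.
move=> He; elim: q F => [|q IH] F.
  rewrite [\sum_(1 <= x < 1) _]big_geq //; case: e He => [|[|]] //= _.
    by rewrite big_geq.
  by rewrite add0n mul1n big_nat_recr //= big_geq.
have -> : (q.+1.*2 + e).+1 = (q.*2 + e).+2.+1 by rewrite doubleS.
rewrite big_nat_recl // big_nat_recr //= IH.
rewrite [in RHS]big_nat_recl //.
have -> : \sum_(1 <= i < q.+1) (F i.+1 + F ((q.*2 + e).+3 - i.+1)) =
          \sum_(1 <= i < q.+1) (F i.+1 + F ((q.*2 + e).+1 - i).+1).
  apply: eq_big_nat => i /andP[i1 iq]; congr (_ + F _); lia.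
have -> : (q.*2 + e).+3 - 1 = (q.*2+e).+2 by lia.
lia.
Qed.

Lemma lb_sum a b c (F : nat -> nat) : (forall i, a <= i < b -> c <= F i) ->
  (b - a) * c <= \sum_(a <= i < b) F i.
Proof.
move=> H; rewrite -sum_nat_const_nat big_nat_cond [X in _ <= X]big_nat_cond.
apply: leq_sum => i /andP[Hi _]; exact: H.
Qed.

Lemma eq_from_sum a b (F : nat -> nat) : (forall i, a <= i < b -> 1 <= F i) ->
  \sum_(a <= i < b) F i <= b - a -> forall i, a <= i < b -> F i = 1.
Proof.
move=> H Hs i /andP[ai ib].
rewrite (big_cat_nat (n := i)) ?(ltnW ib) //= [\sum_(i <= j < b) _]big_ltn // in Hs.
have Fi : 1 <= F i by apply: H; rewrite ai ib.
have : F i <= 1.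
  have A1 : (i - a) * 1 <= \sum_(a <= j < i) F j.
    apply: lb_sum => j /andP[aj ji]; apply: H; apply/andP; split => //; exact: ltn_trans ji ib.
  have A2 : (b - i.+1) * 1 <= \sum_(i.+1 <= j < b) F j.
    apply: lb_sum => j /andP[aj ji]; apply: H; apply/andP; split => //; exact: leq_trans ai (ltnW aj).
  lia.
lia.
Qed.

Lemma Tk k : 1 <= k -> T (2 * k - 1) = (2 * k - 1) * k.
Proof.
move=> k1; rewrite /T.
have -> : (2 * k - 1).+1 = k * 2 by lia.
by rewrite mulnA mulnK.
Qed.

Lemma gauss j : (sumn (iota 1 j)).*2 = j * j.+1.
Proof.
elim: j => [|j IH] //.
have -> : iota 1 j.+1 = iota 1 j ++ [:: j.+1].
  by rewrite -[j.+1]addn1 iotaD addnC.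
rewrite sumn_cat doubleD IH /= addn0; lia.
Qed.

Definition wit k := iota 1 (2 * k - 4) ++ [:: 2 * k; 4 * k - 6].

Lemma wit_last k : largest (wit k) = 4 * k - 6.
Proof. by rewrite /largest /wit last_cat. Qed.

Lemma wit_unref k : 4 <= k -> unrefinable (T (2 * k - 1)) (wit k).
Proof.
move=> k4; apply/andP; split.
  apply/and4P; split.
  - rewrite sorted_pairwise; last exact: ltn_trans.
    rewrite /wit pairwise_cat -sorted_pairwise ?iota_ltn_sorted; last exact: ltn_trans.
    rewrite /= andbT !andbT; apply/andP; split; last lia.
    apply/allrelP => x y; rewrite mem_iota !inE => Hx /orP[]/eqP ->; lia.
  - rewrite /wit all_cat; apply/andP; split.
      by apply/allP => x; rewrite mem_iota => /andP[].
    rewrite /= andbT; apply/andP; split; lia.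
  - rewrite /wit sumn_cat Tk; last lia.
    have G := gauss (2 * k - 4); apply/eqP; rewrite /=.
    nia.
  - rewrite /wit size_cat /=; lia.
apply/hasPn => a; rewrite mem_filter wit_last mem_iota => /andP[aw /andP[a1 am]].
apply/hasPn => b; rewrite mem_filter mem_iota => /andP[bw /andP[b1 bm]].
apply/negP => /andP[/eqP ab].
have ha : 2 * k - 3 <= a.
  move: aw; rewrite /wit mem_cat mem_iota negb_or => /andP[H _]; move: H; lia.
have hb : 2 * k - 3 <= b.
  move: bw; rewrite /wit mem_cat mem_iota negb_or => /andP[H _]; move: H; lia.
rewrite /wit mem_cat mem_iota !inE; lia.
Qed.

Lemma basic N l : is_dpart N l ->
  [/\ sorted ltn l, uniq l, forall x, x \in l -> 1 <= x <= largest l,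
      largest l \in l & 2 <= size l].
Proof.
case/and4P => Hs Hp _ Hsz.
have Hu : uniq l by exact: sorted_uniq ltn_trans ltnn _ Hs.
case: l Hs Hp Hsz Hu => [|a l] // Hs Hp Hsz Hu; split => //.
- move=> x Hx; apply/andP; split; first by move/allP: Hp => /(_ x Hx).
  rewrite /largest /=; exact: le_last_path Hs x Hx.
- exact: mem_last.
Qed.

Lemma filt_eq (l : seq nat) m : sorted ltn l -> (forall x, x \in l -> x <= m) ->
  [seq j <- iota 0 m.+1 | j \in l] = l.
Proof.
move=> Hs Hb; apply: (irr_sorted_eq ltn_trans ltnn) => //.
  apply: sorted_filter; [exact: ltn_trans | exact: iota_ltn_sorted].
move=> x; rewrite mem_filter mem_iota add0n ltnS.
by case Hx: (x \in l) => //=; rewrite Hb.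
Qed.

Lemma sum_count a b (p : pred nat) :
  \sum_(a <= x < b) (p x : nat) = count p (iota a (b - a)).
Proof.
rewrite -sum1_count [RHS]big_mkcond /= /index_iota; apply: eq_bigr => i _; by case: (p i).
Qed.

Lemma sumn_sum (l : seq nat) m : sorted ltn l -> (forall x, x \in l -> x <= m) ->
  sumn l = \sum_(0 <= x < m.+1) x * (x \in l).
Proof.
move=> Hs Hb; rewrite -{1}(filt_eq Hs Hb) sumnE big_filter.
rewrite /index_iota subn0 big_mkcond /=; apply: eq_bigr => i _.
by case: (i \in l); rewrite ?muln1 ?muln0.
Qed.

Lemma id1 k : 4 <= k -> (2 * k - 1) * k = (2 * k - 3) * (k - 1) + 4 * k - 3.
Proof. move=> h; nia. Qed.
Lemma id2 k : 4 <= k -> (2 * k - 3) * (2 * k - 3).+1 = ((2 * k - 3) * (k - 1)).*2.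
Proof. move=> h; nia. Qed.

Lemma struct k l : 4 <= k -> Ubar (T (2 * k - 1)) l ->
  largest l = 4 * k - 6 /\
  (forall x, 0 < x < largest l -> x != (largest l)./2 ->
     (x \in l) = (largest l - x \notin l)) /\
  (largest l)./2 \notin l.
Proof.
move=> k4 [[/andP[Hd Hnr] Hmax] Hmiss].
have [Hs Hu Hb Hml Hsz] := basic Hd.
have Hw : 4 * k - 6 <= largest l by rewrite -(wit_last k); apply: Hmax; exact: wit_unref.
have Hsum : sumn l = (2 * k - 1) * k.
  by case/and4P: Hd => _ _ /eqP -> _; rewrite Tk //; lia.
move: Hmiss Hnr; rewrite /missing /refinable.
set m := largest l in Hb Hml Hw *.
move=> Hmiss Hnr.
have m1 : 1 <= m by case/andP: (Hb _ Hml).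
have Hnr' : forall a b, 0 < a <= m -> 0 < b <= m -> a \notin l -> b \notin l ->
    a != b -> a + b \notin l.
  move=> a b Ha Hb' na nb ab.
  have am : a \in [seq x <- iota 1 m | x \notin l] by rewrite mem_filter na mem_iota; clear -Ha; lia.
  have bm : b \in [seq x <- iota 1 m | x \notin l] by rewrite mem_filter nb mem_iota; clear -Hb'; lia.
  move/hasPn: Hnr => /(_ a am) /hasPn /(_ b bm); by rewrite ab.
have Hl0 : 0 \notin l by apply/negP => /Hb.
have Ht : size l = m - m./2.
  have C1 : count (fun j => j \in l) (iota 0 m.+1) = size l.
    by rewrite -size_filter filt_eq // => x /Hb /andP[].
  have C2 : count (fun j => j \in l) (iota 1 m) + count (fun x => x \notin l) (iota 1 m) = m
    := etrans (count_predC (fun j => j \in l) (iota 1 m)) (size_iota 1 m).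
  move: Hmiss; rewrite size_filter => Hmiss.
  move: C1; rewrite /= (negbTE Hl0) add0n => C1.
  move: C2; rewrite Hmiss C1 => C2; clear -C2; lia.
have [q [e [He Hm']]] : exists q e, e <= 1 /\ m = (q.*2 + e).+1.
  by exists (m.-1)./2, (odd m.-1); clear -m1; lia.
have SP : \sum_(1 <= x < m) (x \in l : nat) = size l - 1.
  have := sum_count 1 m.+1 (fun x => x \in l).
  rewrite big_nat_recr //= Hml subSS subn0.
  have -> : count (fun x => x \in l) (iota 1 m) = size l.
    have C1 : count (fun j => j \in l) (iota 0 m.+1) = size l.
      by rewrite -size_filter filt_eq // => x /Hb /andP[].
    by move: C1; rewrite /= (negbTE Hl0) add0n.
  clear; lia.
have SPL := split_sum q (fun x => (x \in l : nat)) He.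
rewrite -Hm' SP in SPL.
have Hlb : forall x, 1 <= x < q.+1 -> 1 <= (x \in l) + (m - x \in l).
  move=> x Hx; case Px: (x \in l) => //; case Py: (m - x \in l) => //.
  have := Hnr' x (m - x); rewrite Px Py subnKC; last by clear -Hx Hm'; lia.
  rewrite Hml => H.
  have A1 : 0 < x <= m by clear -Hx Hm'; lia.
  have A2 : 0 < m - x <= m by clear -Hx Hm'; lia.
  have A3 : x != m - x by apply/eqP; clear -Hx Hm' He; lia.
  by move: (H A1 A2 isT isT A3).
have LB := lb_sum (a := 1) (b := q.+1) (c := 1) (F := fun x => (x \in l) + (m - x \in l)) Hlb.
have Hpair := eq_from_sum (a := 1) (b := q.+1) (F := fun x => (x \in l) + (m - x \in l)) Hlb.
have Hmid : e * (q.+1 \in l) = 0 by clear -SPL LB Ht Hm' He; lia.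
have {}Hpair : forall x, 1 <= x < q.+1 -> (x \in l) + (m - x \in l) = 1.
  by apply: Hpair; clear -SPL LB Ht Hm' He; lia.
have SY : \sum_(1 <= x < m) x * (x \in l) = (2 * k - 1) * k - m.
  rewrite -Hsum (sumn_sum Hs (m := m)); last by move=> x /Hb /andP[].
  rewrite [in RHS]big_ltn // [in RHS]big_nat_recr //= Hml; clear; lia.
have SPL2 := split_sum q (fun x => x * (x \in l)) He.
rewrite -Hm' SY in SPL2.
have Hmid2 : e * (q.+1 * (q.+1 \in l)) = 0 by rewrite mulnCA Hmid muln0.
rewrite Hmid2 addn0 in SPL2.
have E : \sum_(1 <= x < q.+1) (x * (x \in l) + (m - x) * (m - x \in l)) =
          \sum_(1 <= x < q.+1) (x + (m - x \in l) * (m - x.*2)).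
  apply: eq_big_nat => x Hx; have := Hpair x Hx.
  case: (x \in l); case: (m - x \in l) => //= _; clear -Hx Hm' He; lia.
rewrite E in SPL2.
rewrite big_split /= in SPL2.
have G2 : (\sum_(1 <= x < q.+1) x).*2 = q * q.+1.
  rewrite -gauss sumnE; congr (_.*2); by rewrite /index_iota subSS subn0.
set D := \sum_(1 <= x < q.+1) (m - x \in l) * (m - x.*2) in SPL2.
set G := \sum_(1 <= x < q.+1) x in SPL2 G2.
have Hq1 : q <= 2 * k - 3.
  case: (leqP q (2 * k - 3)) => // Hq; exfalso.
  have : (2 * k - 2) * (2 * k - 1) <= q * q.+1 by apply: leq_mul; clear -Hq; lia.
  clear -SPL2 G2 Hm' He k4 Hq; nia.
have Hq2 : 2 * k - 4 <= q by clear -Hw Hm' He; lia.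
have Hq : q = 2 * k - 4.
  case: (q =P 2 * k - 4) => // Hne; exfalso.
  have Hq3 : q = 2 * k - 3 by clear -Hq1 Hq2 Hne; lia.
  case: e He Hm' Hmid SPL SPL2 Hmid2 => [|[|//]] _ Hm' Hmid SPL SPL2 Hmid2.
  - (* m odd, m = 4k - 5 *)
    have HD : D = \sum_(1 <= x < q) (m - x \in l) * (m - x.*2) + (m - q \in l) * (m - q.*2).
      by rewrite /D big_nat_recr //=; lia.
    have HD' : (\sum_(1 <= x < q) (m - x \in l) * (m - x.*2) == 0) ||
               (3 <= \sum_(1 <= x < q) (m - x \in l) * (m - x.*2)).
      rewrite big_nat_cond; apply: (big_ind (fun y => (y == 0) || (3 <= y))) => //.
        clear; move=> y1 y2 /orP[/eqP->|?] /orP[/eqP->|?] //=; rewrite ?addn0 ?add0n ?eqxx //; apply/orP; right; lia.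
      move=> x /andP[/andP[x1 xq] _]; case: (m - x \in l) => /=; clear -x1 xq Hm' Hq3 k4; lia.
    have Hdq : (m - q \in l) * (m - q.*2) <= 1 by case: (m - q \in l) => /=; clear -Hm'; lia.
    have I1 := id1 k4; have I2 := id2 k4.
    rewrite Hq3 I2 in G2.
    move: I1 G2; set X := (2 * k - 3) * (k - 1); clearbody X => I1 G2.
    rewrite I1 in SPL2; clear -SPL2 G2 HD HD' Hdq Hm' Hq3 k4; lia.
  - (* m even, m = 4k - 4 *)
    have HD : 2 %| D.
      rewrite /D; apply: dvdn_sum => x _.
      case: (m - x \in l); rewrite ?mul0n ?dvdn0 // mul1n dvdn2; clear -Hm'; lia.
    move: HD; rewrite dvdn2 => HD.
    have I1 := id1 k4; have I2 := id2 k4.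
    rewrite Hq3 I2 in G2.
    move: I1 G2; set X := (2 * k - 3) * (k - 1); clearbody X => I1 G2.
    rewrite I1 in SPL2; clear -SPL2 G2 HD Hm' Hq3 k4; lia.
have He1 : e = 1 by clear -Hq Hw Hm' He k4; lia.
have Hm2 : m./2 = q.+1 by clear -He1 Hm'; lia.
rewrite Hm2; split; first by clear -Hq He1 Hm' k4; lia.
split; last by move: Hmid; rewrite He1 mul1n; case: (q.+1 \in l).
move=> x Hx Hxq.
case: (ltnP x q.+1) => Hxl.
  have := Hpair x; case: (x \in l); case: (m - x \in l) => //= H; have := H _; 
    (have Hx1 : 1 <= x < q.+1 by clear -Hx Hxl; lia); move=> /(_ Hx1) //.
have Hy : 1 <= m - x < q.+1 by move/eqP: Hxq; clear -Hx Hxl Hm' He1; lia.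
have := Hpair (m - x) Hy; rewrite subKn; last by clear -Hx; lia.
by case: (x \in l); case: (m - x \in l).
Qed.

Lemma cnt_rev (a : pred nat) s : forall y m, y + s = m ->
  count a (iota y s.+1) = count (fun x => a (m - x)) (iota 0 s.+1).
Proof.
elim: s => [|s IH] y m Hym.
  by rewrite /= subn0 -Hym !addn0.
have -> : count a (iota y s.+2) = a y + count a (iota y.+1 s.+1) by [].
rewrite (IH y.+1 m); last by clear -Hym; lia.
have -> : iota 0 s.+2 = iota 0 s.+1 ++ [:: s.+1] by rewrite -[s.+2]addn1 iotaD.
rewrite count_cat /= addn0.
have -> : m - s.+1 = y by clear -Hym; lia.
by rewrite addnC.
Qed.

Lemma cnt_compl (a : pred nat) s : count a s + count (fun x => ~~ a x) s = size s.
Proof. exact: count_predC. Qed.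

Lemma cnt_drop1 (a : pred nat) s : 0 < size s ->
  count a s = a (nth 0 s 0) + count a (drop 1 s).
Proof. by case: s => //= x s _; rewrite drop0. Qed.

Lemma cnt_and_neq (a : pred nat) h s : uniq s -> a h ->
  count (fun x => a x && (x != h)) s = count a s - (h \in s).
Proof.
move=> Us ah.
have E : count a s = count (fun x => a x && (x != h)) s + count (pred1 h) s.
  elim: s Us => //= x s IH /andP[_ Us]; rewrite IH //.
  case: (x =P h) => [->|_]; rewrite ?ah /=; lia.
by rewrite E count_uniq_mem // addnK.
Qed.

Lemma hooks (l : seq nat) m h z : sorted ltn l -> (forall x, x \in l -> 0 < x <= m) ->
  m \in l -> m = h.*2 -> 0 < h ->
  (forall x, x <= m -> (m - x \in l) = (x \notin l) && (x != h)) ->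
  nth 0 [seq x <- iota 0 m.+1 | S_lam l x] z = h ->
  (forall i, i < z -> hook (KN (S_lam l) m) i.+1 1 = hook (KN (S_lam l) m) 1 i.+1) /\
  (forall i, z + 1 <= i <= h -> hook (KN (S_lam l) m) 1 i.+1 = hook (KN (S_lam l) m) i 1).
Proof.
move=> Hs Hb Hml Hm h0 R Hz.
have Hu : uniq l by exact: sorted_uniq ltn_trans ltnn _ Hs.
have Hbm : forall x, x \in l -> x <= m by move=> x /Hb /andP[].
have Hl0 : 0 \notin l by apply/negP => /Hb.
set r := fun j => count (S_lam l) (iota 0 j).
have HKN : KN (S_lam l) m = rev (map r l).
  rewrite /KN; congr (rev (map _ _)).
  rewrite -[RHS](filt_eq Hs Hbm); apply: eq_filter => x; by rewrite /S_lam negbK.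
rewrite HKN.
set p := rev (map r l).
set t := size l.
set sS := [seq x <- iota 0 m.+1 | S_lam l x] in Hz *.
have HsS : sorted ltn sS.
  apply: sorted_filter; [exact: ltn_trans | exact: iota_ltn_sorted].
have HuS : uniq sS by exact: sorted_uniq ltn_trans ltnn _ HsS.
have memS : forall x, (x \in sS) = (x <= m) && (x \notin l).
  by move=> x; rewrite mem_filter mem_iota /S_lam add0n ltnS andbC.
have cP : forall y, count (fun x => x \in l) (iota 0 y) = count (fun x => x < y) l.
  by move=> y; rewrite -cnt_iota.
have cS : forall y, y <= m.+1 -> r y = count (fun x => x < y) sS.
  move=> y Hy; rewrite /r -cnt_iota //; apply: eq_in_count => x.
  rewrite mem_iota add0n => /andP[_ xy].
  rewrite [mem sS x]/= memS /S_lam.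
  by rewrite (_ : x <= m) //; clear -xy Hy; lia.
have cPS : forall y, count (fun x => x \in l) (iota 0 y) + r y = y.
  by move=> y; rewrite /r -[X in _ = X](size_iota 0 y); exact: cnt_compl.
have Ht : count (fun x => x < m.+1) l = t.
  rewrite /t -(count_predT l); apply: eq_in_count => x /Hbm; by rewrite ltnS => ->.
have HZ : size sS = m.+1 - t.
  have E : size sS = count (S_lam l) (iota 0 m.+1) by rewrite size_filter.
  have := cPS m.+1; rewrite cP Ht /r -E; clear; lia.
have hl : h \notin l.
  have := R h; rewrite eqxx andbF (_ : m - h = h); last by rewrite Hm; clear; lia.
  by move=> H; rewrite H //; rewrite Hm; clear; lia.
have Hrefl : forall s, s <= m ->
    count (fun x => x \in l) (iota (m - s) s.+1) = r s.+1 - (h <= s).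
  move=> s sm; rewrite (cnt_rev _ (m := m)); last by clear -sm; lia.
  rewrite (eq_in_count (a2 := fun x => S_lam l x && (x != h))); last first.
    move=> x; rewrite mem_iota add0n => /andP[_ xs]; apply: R; clear -xs sm; lia.
  by rewrite cnt_and_neq ?iota_uniq // mem_iota add0n ltnS.
have rS : r m.+1 = size sS by rewrite /r size_filter.
have Tt : t = h.
  have := Hrefl m (leqnn m); rewrite subnn cP Ht rS HZ.
  have : h <= m by rewrite Hm; clear; lia.
  move=> -> /=; rewrite Hm; clear; lia.
have rpos : forall x, 0 < x -> 0 < r x.
  by move=> [|x] // _; rewrite /r /= {1}/S_lam Hl0.
have pge1 : forall y, y \in p -> 0 < y.
  move=> y; rewrite mem_rev => /mapP[x xl ->]; apply: rpos; by case/andP: (Hb x xl).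
have H1 : forall i, 1 <= i <= t -> hook p i 1 = nth 0 l (t - i).
  move=> i /andP[i1 it]; rewrite /hook.
  have Hsz : size p = t by rewrite /p size_rev size_map.
  rewrite /p nth_rev size_map; last by clear -i1 it; lia.
  rewrite (nth_map 0); last by clear -i1 it; lia.
  have -> : count (fun r0 => 1 <= r0) (drop i (rev (map r l))) = t - i.
    have -> : t - i = size (drop i (rev (map r l))) by rewrite size_drop -/p Hsz.
    apply/eqP; rewrite -all_count.
    apply/allP => y /mem_drop; exact: pge1.
  have -> : size l - i.-1.+1 = t - i by rewrite -/t; clear -i1 it; lia.
  set lam := nth 0 l (t - i).
  have lamin : lam \in l by apply: mem_nth; rewrite -/t; clear -i1 it; lia.
  have := cPS lam; rewrite cP /lam cnt_lt_nth //; last by rewrite -/t; clear -i1 it; lia.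
  have := rpos lam; rewrite /lam; case/andP: (Hb _ lamin) => /= lp _ /(_ lp).
  clear; lia.
have Hsz : size p = t by rewrite /p size_rev size_map.
have t1 : 0 < t by rewrite /t; case: (l) Hml.
have lastm : nth 0 l (t - 1) = m.
  have := cnt_le_index Hs Hml; rewrite Ht => E.
  by rewrite (_ : t - 1 = index m l) ?nth_index //; clear -E; lia.
have p0 : nth 0 p 0 = r m.
  rewrite /p nth_rev size_map // (nth_map 0); last by rewrite -/t; clear -t1; lia.
  by rewrite subn1 -subn1 lastm.
have rm : r m = size sS.
  rewrite -rS /r -addn1 iotaD count_cat /= /S_lam Hml /=; clear; lia.
have H2 : forall c, 1 <= c <= size sS -> hook p 1 c = m - nth 0 sS c.-1.
  move=> c /andP[c1 cZ]; rewrite /hook /= p0.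
  set s := nth 0 sS c.-1.
  have cS1 : c.-1 < size sS by rewrite prednK.
  have sin : s \in sS by apply: mem_nth.
  move: (sin); rewrite memS => /andP[sm sl].
  have sltm : s < m by rewrite ltn_neqAle sm andbT; apply/eqP => E; rewrite E Hml in sl.
  have Hc : count (fun x => x <= s) sS = c.
    by rewrite /s cnt_le_nth // prednK.
  have E1 : count (fun y => c <= y) p = count (fun x => s < x) l.
    rewrite /p count_rev count_map; apply: eq_in_count => x xl /=.
    rewrite cS; last by rewrite ltnW // ltnS Hbm.
    apply/idP/idP => H.
      rewrite ltnNge; apply/negP => xs.
      have : count (fun y => y < x) sS <= count (fun y => y < s) sS.
        apply: sub_count => y /= yx; exact: leq_trans yx xs.
      rewrite cnt_lt_nth //.
      clear -H c1; lia.
    rewrite -Hc; apply: sub_count => y /= ys; exact: leq_ltn_trans ys H.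
  have E2 := cnt_drop1 (fun y => c <= y) (_ : 0 < size p).
  rewrite E1 p0 in E2.
  have E3 := cnt_compl (fun x => s < x) l.
  have E4 : count (fun x => ~~ (s < x)) l = count (fun x => x < s.+1) l.
    by apply: eq_count => x /=; rewrite -leqNgt.
  rewrite E4 -cP -/t in E3.
  have E5 := cPS s.+1.
  rewrite cS in E5; last by clear -sm; lia.
  have E6 : count (fun x => x < s.+1) sS = c by rewrite -Hc.
  rewrite E6 in E5.
  have E7 : 0 < count (fun x => s < x) l by rewrite -has_count; apply/hasP; exists m.
  have ps : 0 < size p by rewrite Hsz.
  have {}E2 := E2 ps; rewrite rm cZ /= in E2.
  rewrite rm; clear -E2 E3 E5 E7 cZ c1 HZ sltm; lia.
have zS : z < size sS.
  rewrite ltnNge; apply/negP => Hle; move: Hz; rewrite nth_default // => E.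
  by rewrite -E in h0.
have sizeS : size sS = h.+1 by rewrite HZ Tt Hm; clear; lia.
have Hnth : forall i, i < size sS -> i != z ->
    nth 0 l (t - (i.+1 - (h <= nth 0 sS i))) = m - nth 0 sS i.
  move=> i iS iz.
  set s := nth 0 sS i.
  have sin : s \in sS by apply: mem_nth.
  move: (sin); rewrite memS => /andP[sm sl].
  have sh : s != h by rewrite -Hz /s nth_uniq.
  have yin : m - s \in l by rewrite R // sl sh.
  have Ecnt : count (fun x => x < m - s) l = t - (i.+1 - (h <= s)).
    rewrite -cP.
    have E0 := cP m.+1; rewrite Ht in E0.
    rewrite (_ : m.+1 = (m - s) + s.+1) in E0; last by clear -sm; lia.
    rewrite iotaD count_cat add0n Hrefl // in E0.
    rewrite cS in E0; last by clear -sm; lia.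
    have Ec : count (fun x => x < s.+1) sS = i.+1.
      rewrite -(cnt_le_nth HsS iS); apply: eq_count => x /=; by rewrite ltnS.
    rewrite Ec in E0; clear -E0; lia.
  by rewrite -Ecnt cnt_lt_index // nth_index.
have tS : t = h by [].
split => i Hi.
- have iS : i < size sS by exact: ltn_trans Hi zS.
  have slt : nth 0 sS i < h.
    rewrite -Hz; exact: (sorted_ltn_nth ltn_trans 0 HsS).
  rewrite H1; last by apply/andP; split => //; rewrite Tt -ltnS -sizeS; exact: leq_ltn_trans Hi zS.
  rewrite H2; last by apply/andP; split => //.
  have := Hnth i iS (negbT (ltn_eqF Hi)); rewrite leqNgt slt /= subn0 => ->.
  by [].
- case/andP: Hi => zi ih.
  have iS : i < size sS by rewrite sizeS ltnS.
  have izn : i != z by apply/eqP => E; rewrite E in zi; clear -zi; lia.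
  have slt : h < nth 0 sS i.
    rewrite -Hz; apply: (sorted_ltn_nth ltn_trans 0 HsS) => //; clear -zi; lia.
  rewrite H2; last by apply/andP; split => //.
  rewrite H1; last by apply/andP; split; [clear -zi; lia | rewrite Tt].
  have := Hnth i iS izn; rewrite (ltnW slt) subn1 /= => ->.
  by [].
Qed.

Theorem lemma3p3 (k : nat) (l : seq nat) (z : nat) :
  4 <= k ->
  Ubar (T (2 * k - 1)) l ->
  (* s_z = n - 2, where s_0 < s_1 < ... enumerate S_lambda *)
  nth 0 [seq x <- iota 0 (largest l).+1 | S_lam l x] z = 2 * k - 1 - 2 ->
  (forall i, i < z ->
     hook (KN (S_lam l) (largest l)) i.+1 1 = hook (KN (S_lam l) (largest l)) 1 i.+1) /\
  (forall i, z + 1 <= i <= 2 * k - 1 - 2 ->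
     hook (KN (S_lam l) (largest l)) 1 i.+1 = hook (KN (S_lam l) (largest l)) i 1).
Proof.
move=> k4 HU Hz.
have Hd : is_dpart (T (2 * k - 1)) l by case: HU => [[/andP[]]].
have [Hm [Hpair Hmid]] := struct k4 HU.
have [Hs Hu Hb Hml Hsz] := basic Hd.
have Hh : 2 * k - 1 - 2 = (largest l)./2 by rewrite Hm; clear -k4; lia.
rewrite Hh in Hz *.
have Hl0 : 0 \notin l by apply/negP => /Hb.
apply: (hooks Hs Hb Hml) => //.
- by rewrite Hm; clear -k4; lia.
- by rewrite Hm; clear -k4; lia.
move=> x xm.
case: (posnP x) => [->|x0].
  rewrite subn0 Hml Hl0 /=; apply/esym/eqP; rewrite Hm; clear -k4; lia.
case: (ltnP x (largest l)) => xl; last first.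
  have -> : x = largest l by apply/eqP; rewrite eqn_leq xm xl.
  by rewrite subnn (negbTE Hl0) Hml.
case: (x =P (largest l)./2) => [->|/eqP xh].
  rewrite andbF (_ : largest l - (largest l)./2 = (largest l)./2) ?(negbTE Hmid) //.
  by rewrite Hm; clear -k4; lia.
have xr : 0 < x < largest l by rewrite x0 xl.
by rewrite andbT (Hpair x xr xh) negbK.
Qed.
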